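(* Let $C\ge 1$ and $D\ge 0$ be integers and let $L=\{1,\dots,C\}$ be a set of labels. Let $(p_s)_{s=1}^C$ be a probability distribution on $L$ with all $p_s>0$. For each $s\in L$ let $q_s$ be a probability distribution on $\{0,1,\dots,D\}$. Let $c_{sr}\ge 0$ ($s,r\in L$) be given with $\sum_{k=1}^C p_k c_{sk}>0$ for every $s$, and set $$z_{sr}=\frac{p_r c_{sr}}{\sum_{k=1}^C p_k c_{sk}}\qquad (s,r\in L),$$ so that each $(z_{s1},\dots,z_{sC})$ is a probability vector. Consider the random pair $(\ell,\mathcal{M})$ generated as follows: $\ell\in L$ has $P(\ell=s)=p_s$; conditionally on $\ell=s$, a degree $d\in\{0,\dots,D\}$ is drawn with probability $q_s(d)$, and then $d$ neighbor labels are drawn independently, each equal to $r$ with probability $z_{sr}$; $\mathcal{M}$ is the resulting unordered multiset of neighbor labels, equivalently the count vector $(n_1,\dots,n_C)$ with $n_k$ the number of neighbor labels equal to $k$ (so $\sum_k n_k=d$). Thus $$P(\mathcal{M}=(n_1,\dots,n_C)\mid \ell=s)=q_s(d)\,\frac{d!}{\prod_{k=1}^C n_k!}\prod_{k=1}^C z_{sk}^{n_k},\qquad d=\textstyle\sum_k n_k.$$ (This is the model of a labelled random graph in which a node with label $r$ connects to a node with label $s$ with probability $c_{sr}$, nodes with label $s$ have degree distribution $q_s$, and the number of nodes is much larger than the maximum degree $D$, so that neighbor labels of a node with label $s$ are i.i.d. with law $z_{s\cdot}$.) Then the mutual information (in nats) between $\ell$ and $\mathcal{M}$ satisfies $$MI(\ell;\mathcal{M})\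 \ge\ NIC:=-\sum_{s=1}^C p_s\ln\!\left(\sum_{r=1}^C p_r\sum_{d=0}^{D}\sqrt{q_s(d)q_r(d)}\Big(\sum_{k=1}^C\sqrt{z_{sk}z_{rk}}\Big)^{d}\right).$$
   Context: $MI(X;Y)=H(Y)-H(Y\mid X)$ with natural logarithms. The quantity $NIC$ is called the Neighborhood Information Content; $p_s$ is the probability a node has label $s$, $c_{sr}$ the probability a node of label $r$ connects to a node of label $s$, $q_s$ the degree distribution of nodes with label $s$, and $z_{sr}$ equals the probability that a neighbor of a label-$s$ node has label $r$. *)

(* Defs.v *)
From HB Require Import structures.
From mathcomp Require Import all_boot all_order all_algebra.
From mathcomp Require Import all_classical all_reals all_analysis.
Set Implicit Arguments. Unset Strict Implicit. Unset Printing Implicit Defensive.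
Import Order.TTheory GRing.Theory Num.Theory.
Local Open Scope ring_scope.

Section Defs.
Variable R : realType.

Definition xlnx (x : R) : R := if x == 0 then 0 else x * ln x.

Definition zprob (C : nat) (p : 'I_C -> R) (c : 'I_C -> 'I_C -> R)
  (s r : 'I_C) : R := p r * c s r / \sum_(k < C) p k * c s k.

(* Neighbour count vectors (n_1,...,n_C) with total degree d = sum n_k <= D. *)
Definition degree (C D : nat) (n : {ffun 'I_C -> 'I_D.+1}) : nat :=
  \sum_(k < C) (n k : nat).

Definition countvec (C D : nat) : pred {ffun 'I_C -> 'I_D.+1} :=
  fun n => (degree n <= D)%N.

Definition condP (C D : nat) (q : 'I_C -> 'I_D.+1 -> R) (z : 'I_C -> 'I_C -> R)
  (s : 'I_C) (n : {ffun 'I_C -> 'I_D.+1}) : R :=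
  q s (inord (degree n)) * ((degree n)`!)%:R / (\prod_(k < C) (n k)`!)%:R
  * \prod_(k < C) z s k ^+ (n k).

Definition margP (C D : nat) (p : 'I_C -> R) (q : 'I_C -> 'I_D.+1 -> R)
  (z : 'I_C -> 'I_C -> R) (n : {ffun 'I_C -> 'I_D.+1}) : R :=
  \sum_(s < C) p s * condP q z s n.

Definition entropyM (C D : nat) (p : 'I_C -> R) (q : 'I_C -> 'I_D.+1 -> R)
  (z : 'I_C -> 'I_C -> R) : R :=
  - \sum_(n in @countvec C D) xlnx (margP p q z n).

Definition condEntropyM (C D : nat) (p : 'I_C -> R) (q : 'I_C -> 'I_D.+1 -> R)
  (z : 'I_C -> 'I_C -> R) : R :=
  \sum_(s < C) p s * (- \sum_(n in @countvec C D) xlnx (condP q z s n)).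

Definition MI (C D : nat) (p : 'I_C -> R) (q : 'I_C -> 'I_D.+1 -> R)
  (z : 'I_C -> 'I_C -> R) : R := entropyM p q z - condEntropyM p q z.

Definition NIC (C D : nat) (p : 'I_C -> R) (q : 'I_C -> 'I_D.+1 -> R)
  (z : 'I_C -> 'I_C -> R) : R :=
  - \sum_(s < C) p s * ln (\sum_(r < C) p r *
      \sum_(d < D.+1) Num.sqrt (q s d * q r d) *
        (\sum_(k < C) Num.sqrt (z s k * z r k)) ^+ d).
End Defs.

(* Main.v *)
Require Import Defs.
From HB Require Import structures.
From mathcomp Require Import all_boot all_order all_algebra.
From mathcomp Require Import all_classical all_reals all_analysis.
From mathcomp Require Import ring lra.
Import Order.TTheory GRing.Theory Num.Theory.
Local Open Scope ring_scope.

Section Analytic.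
Variable R : realType.

Lemma ln_le_sub1 (u : R) : 0 < u -> ln u <= u - 1.
Proof.
move=> u0; have := @le_ln1Dx R (u - 1); rewrite (addrC 1) subrK; apply; lra.
Qed.

Lemma ln_div3 (a b c : R) : 0 < a -> 0 < b -> 0 < c ->
  ln (a / (b * c)) = ln a - ln b - ln c.
Proof.
move=> a0 b0 c0.
rewrite lnM ?posrE ?invr_gt0 ?mulr_gt0 // lnV ?posrE ?mulr_gt0 //.
by rewrite lnM ?posrE // opprD addrA.
Qed.

Lemma ln_sqrt2 (a : R) : ln a = 2 * ln (Num.sqrt a).
Proof.
have [a0|a0] := leP a 0.
  by rewrite ln0 // (eqP (_ : Num.sqrt a == 0)) ?ln0 ?mulr0 // sqrtr_eq0.
rewrite -{1}(sqr_sqrtr (ltW a0)) lnXn ?sqrtr_gt0 // mulr2n; lra.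
Qed.

Lemma xlnxE (a : R) : xlnx a = a * ln a.
Proof. by rewrite /xlnx; case: eqP => [->|]; rewrite ?mul0r. Qed.

Lemma partA (T : finType) (A : pred T) (x a : T -> R) (B : R) :
  (forall n, 0 <= x n) -> \sum_(n in A) x n ^+ 2 = 1 -> 0 < B ->
  B = \sum_(n in A) x n * a n -> (forall n, 0 < x n -> 0 < a n) ->
  \sum_(n in A) x n ^+ 2 * (ln (a n) - ln (x n)) <= ln B.
Proof.
move=> x0 sx B0 EB ax.
have key : forall n, x n ^+ 2 * (ln (a n) - ln (x n)) - x n ^+ 2 * ln B
   <= x n * a n / B - x n ^+ 2.
  move=> n; have [xn0|xn0] := eqVneq (x n) 0.
    by rewrite xn0 !expr2 !mul0r subrr.
  have xp : 0 < x n by rewrite lt0r xn0 x0.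
  have ap := ax n xp.
  have := @ln_le_sub1 (a n / (x n * B)) (divr_gt0 ap (mulr_gt0 xp B0)).
  rewrite ln_div3 // => H.
  have E : x n * a n / B - x n ^+ 2 = x n ^+ 2 * (a n / (x n * B) - 1).
    field; apply/andP; split; apply/lt0r_neq0 => //.
  rewrite E -mulrBr; apply: ler_wpM2l; first exact: sqr_ge0.
  lra.
have S : \sum_(n in A) (x n ^+ 2 * (ln (a n) - ln (x n)) - x n ^+ 2 * ln B)
   <= \sum_(n in A) (x n * a n / B - x n ^+ 2).
  by apply: ler_sum => n _; exact: key.
move: S; rewrite sumrB sumrB -mulr_suml sx mul1r.
rewrite -mulr_suml -EB divff ?lt0r_neq0 //; lra.
Qed.

Lemma le_sum1 (I : finType) (F : I -> R) (i : I) :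
  (forall j, 0 <= F j) -> F i <= \sum_j F j.
Proof.
move=> F0; rewrite (bigD1 i) //= lerDl; exact: sumr_ge0.
Qed.

Lemma partB (C : nat) (p x : 'I_C -> R) :
  (forall s, 0 < p s) -> (forall s, 0 <= x s) ->
  (\sum_s p s * x s ^+ 2) * ln (\sum_s p s * x s ^+ 2)
  - (\sum_s p s * x s ^+ 2) * ln (\sum_s p s * x s)
  <= \sum_s p s * x s ^+ 2 * ln (x s).
Proof.
move=> p0 x0.
set M := \sum_s p s * x s ^+ 2; set A := \sum_s p s * x s.
have key : forall s, p s * x s ^+ 2 * (ln M - ln A) - p s * x s ^+ 2 * ln (x s)
   <= p s * x s * (M / A) - p s * x s ^+ 2.
  move=> s; have [xs0|xs0] := eqVneq (x s) 0.
    by rewrite xs0 !expr2 !mul0r !mulr0 !mul0r subrr.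
  have xp : 0 < x s by rewrite lt0r xs0 x0.
  have Mp : 0 < M.
    rewrite /M; apply: (@lt_le_trans _ _ (p s * x s ^+ 2)); last first.
      by apply: le_sum1 => j; exact: mulr_ge0 (ltW (p0 j)) (sqr_ge0 _).
    by rewrite mulr_gt0 ?exprn_gt0.
  have Ap : 0 < A.
    rewrite /A; apply: (@lt_le_trans _ _ (p s * x s)); last first.
      by apply: le_sum1 => j; exact: mulr_ge0 (ltW (p0 j)) (x0 j).
    by rewrite mulr_gt0.
  have := @ln_le_sub1 (M / (A * x s)) (divr_gt0 Mp (mulr_gt0 Ap xp)).
  rewrite ln_div3 // => H.
  have E : p s * x s * (M / A) - p s * x s ^+ 2
     = p s * x s ^+ 2 * (M / (A * x s) - 1).
    field; apply/andP; split; apply/lt0r_neq0 => //.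
  rewrite E -mulrBr; apply: ler_wpM2l; first by rewrite mulr_ge0 ?sqr_ge0 ?ltW.
  lra.
have S : \sum_s (p s * x s ^+ 2 * (ln M - ln A) - p s * x s ^+ 2 * ln (x s))
   <= \sum_s (p s * x s * (M / A) - p s * x s ^+ 2).
  by apply: ler_sum => s _; exact: key.
move: S; rewrite !sumrB -!mulr_suml -/M -/A.
have : A * (M / A) <= M.
  have [A0|A0] := eqVneq A 0; first by rewrite A0 mul0r sumr_ge0 // => j _; rewrite mulr_ge0 ?sqr_ge0 ?ltW.
  by rewrite mulrC divfK.
rewrite mulrC; lra.
Qed.

Lemma abstract_bound (C : nat) (T : finType) (A : pred T) (p : 'I_C -> R)
  (P : 'I_C -> T -> R) :
  (forall s, 0 < p s) -> (forall s n, 0 <= P s n) ->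
  (forall s, \sum_(n in A) P s n = 1) ->
  - \sum_s p s * ln (\sum_r p r * \sum_(n in A) Num.sqrt (P s n * P r n))
  <= - \sum_(n in A) xlnx (\sum_s p s * P s n)
     - \sum_s p s * (- \sum_(n in A) xlnx (P s n)).
Proof.
move=> p0 P0 P1.
pose x s n := Num.sqrt (P s n).
have x0 : forall s n, 0 <= x s n by move=> s n; exact: sqrtr_ge0.
have Px : forall s n, P s n = x s n ^+ 2 by move=> s n; rewrite sqr_sqrtr.
pose a n := \sum_r p r * x r n.
have EB : forall s, \sum_r p r * \sum_(n in A) Num.sqrt (P s n * P r n)
   = \sum_(n in A) x s n * a n.
  move=> s; under eq_bigr => r _ do rewrite mulr_sumr.
  rewrite exchange_big; apply: eq_bigr => n _; rewrite /a mulr_sumr.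
  by apply: eq_bigr => r _; rewrite sqrtrM // -/(x s n) -/(x r n) mulrCA.
have hA : forall s, \sum_(n in A) x s n ^+ 2 * (ln (a n) - ln (x s n))
   <= ln (\sum_r p r * \sum_(n in A) Num.sqrt (P s n * P r n)).
  move=> s; rewrite EB; apply: partA => //.
  - by under eq_bigr => n _ do rewrite -Px.
  - apply: (@lt_le_trans _ _ (p s)) => //.
    have -> : p s = \sum_(n in A) x s n * (p s * x s n).
      rewrite -[LHS]mulr1 -(P1 s) mulr_sumr; apply: eq_bigr => n _.
      by rewrite Px; ring.
    apply: ler_sum => n _; apply: ler_wpM2l => //.
    by rewrite /a; apply: (@le_sum1 _ (fun r => p r * x r n)) => r; exact: mulr_ge0 (ltW (p0 r)) (x0 r n).
  - move=> n xp; apply: (@lt_le_trans _ _ (p s * x s n)); first exact: mulr_gt0.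
    by rewrite /a; rewrite /a; apply: (@le_sum1 _ (fun r => p r * x r n)) => r; exact: mulr_ge0 (ltW (p0 r)) (x0 r n).
have step1 : - \sum_s p s * ln (\sum_r p r * \sum_(n in A) Num.sqrt (P s n * P r n))
   <= - \sum_s p s * \sum_(n in A) x s n ^+ 2 * (ln (a n) - ln (x s n)).
  rewrite lerN2; apply: ler_sum => s _; apply: ler_wpM2l; [exact: ltW | exact: hA].
apply: (le_trans step1).
pose M n := \sum_s p s * x s n ^+ 2.
pose L := \sum_(n in A) \sum_s p s * x s n ^+ 2 * ln (x s n).
have E1 : \sum_s p s * \sum_(n in A) x s n ^+ 2 * (ln (a n) - ln (x s n))
   = \sum_(n in A) M n * ln (a n) - L.
  under eq_bigr => s _ do rewrite mulr_sumr.
  rewrite exchange_big -sumrB; apply: eq_bigr => n _.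
  rewrite /M mulr_suml -sumrB; apply: eq_bigr => s _; ring.
have E2 : \sum_s p s * (- \sum_(n in A) xlnx (P s n)) = - (2 * L).
  rewrite /L [in RHS]exchange_big /= mulr_sumr -sumrN; apply: eq_bigr => s _.
  rewrite mulrN mulr_sumr mulr_sumr; congr (- _); apply: eq_bigr => n _.
  rewrite xlnxE ln_sqrt2 -/(x s n) Px; ring.
have E3 : \sum_(n in A) xlnx (\sum_s p s * P s n) = \sum_(n in A) M n * ln (M n).
  apply: eq_bigr => n _; rewrite xlnxE /M; by under eq_bigr => s _ do rewrite Px.
have hB : \sum_(n in A) (M n * ln (M n) - M n * ln (a n)) <= L.
  apply: ler_sum => n _; exact: partB.
rewrite E1 E2 E3; move: hB; rewrite sumrB; lra.
Qed.

End Analytic.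
Section Comb.
Variable R : realType.
Variable D : nat.

Definition Epoly (y : R) : {poly R} :=
  \sum_(j < D.+1) (y ^+ j / (j`!)%:R) *: 'X^j.

Lemma fact_neq0 n : (n`!)%:R != 0 :> R.
Proof. by rewrite pnatr_eq0 -lt0n fact_gt0. Qed.

Lemma coef_Epoly (y : R) j : (j <= D)%N -> (Epoly y)`_j = y ^+ j / (j`!)%:R.
Proof.
move=> jD; rewrite /Epoly coef_sum.
under eq_bigr => i _ do rewrite coefZ coefXn.
rewrite (bigD1 (Ordinal (jD : (j < D.+1)%N))) //= eqxx mulr1 big1 ?addr0 //.
move=> i /negbTE ni; rewrite (_ : (j == i) = false) ?mulr0 //.
by apply/negbTE; apply: contraFneq ni => ji; apply/eqP/val_inj.
Qed.

Lemma coef_prod_Epoly (C : nat) (y : 'I_C -> R) d : (d <= D)%N ->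
  (\prod_(k < C) Epoly (y k))`_d = (\sum_(k < C) y k) ^+ d / (d`!)%:R.
Proof.
elim: C y d => [|C IH] y d dD.
  rewrite !big_ord0 coef1; case: d dD => [|d] _; first by rewrite expr0 fact0 divr1.
  by rewrite expr0n /= mul0r.
rewrite big_ord_recl coefM /=.
set S := \sum_(i < C) y (lift ord0 i).
rewrite [in RHS]big_ord_recl (addrC (y ord0)) exprDn mulr_suml.
apply: eq_bigr => i _.
have id : (i <= d)%N by rewrite -ltnS.
rewrite coef_Epoly ?(leq_trans id) // IH ?(leq_trans (leq_subr _ _)) //.
rewrite -(bin_fact id) !natrM mulr_natr -mulr_natl.
have := fact_neq0 i; have := fact_neq0 (d - i).
have : ('C(d, i))%:R != 0 :> R by rewrite pnatr_eq0 -lt0n bin_gt0.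
move=> h1 h2 h3; field.
by rewrite h1 h2 h3.
Qed.

Lemma sum_deg (C : nat) (y : 'I_C -> R) (d : nat) : (d <= D)%N ->
  \sum_(n : {ffun 'I_C -> 'I_D.+1} | degree n == d)
     \prod_(k < C) (y k ^+ n k / ((n k)`!)%:R)
  = (\sum_(k < C) y k) ^+ d / (d`!)%:R.
Proof.
move=> dD; rewrite -coef_prod_Epoly // /Epoly bigA_distr_bigA /= coef_sum.
rewrite big_mkcond; apply: eq_bigr => f _.
rewrite (eq_bigr (fun i => (y i ^+ f i / (f i)`!%:R)%:P * 'X^(f i))); last first.
  by move=> i _; rewrite mul_polyC.
rewrite [in RHS]big_split /= -(rmorph_prod (@polyC R)) prodrXr mul_polyC coefZ coefXn /degree.
by rewrite eq_sym; case: eqP; rewrite ?mulr1 ?mulr0.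
Qed.

Lemma multinom_sum (C : nat) (w : 'I_D.+1 -> R) (y : 'I_C -> R) :
  \sum_(n in @countvec C D) w (inord (degree n)) * ((degree n)`!)%:R
     / (\prod_(k < C) (n k)`!)%:R * \prod_(k < C) y k ^+ (n k)
  = \sum_(d < D.+1) w d * (\sum_(k < C) y k) ^+ d.
Proof.
set G := fun n : {ffun 'I_C -> 'I_D.+1} => w (inord (degree n)) * ((degree n)`!)%:R
     / (\prod_(k < C) (n k)`!)%:R * \prod_(k < C) y k ^+ (n k).
transitivity (\sum_(d < D.+1) \sum_(n | degree n == d) G n).
  under [RHS]eq_bigr do rewrite big_mkcond.
  rewrite [RHS]exchange_big /= [LHS]big_mkcond; apply: eq_bigr => n _.
  rewrite -big_mkcond /=.
  rewrite (eq_bigl (fun d : 'I_D.+1 => d == degree n :> nat)); last first.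
    by move=> d; rewrite eq_sym.
  by rewrite (big_ord1_eq _ (fun _ => G n)) unfold_in /countvec ltnS.
apply: eq_bigr => d _.
rewrite (eq_bigr (fun n : {ffun 'I_C -> 'I_D.+1} => w d * (d`!)%:R * \prod_k (y k ^+ n k / ((n k)`!)%:R))); last first.
  move=> n /eqP dn; rewrite /G dn inord_val prodf_div natr_prod [RHS]mulrA [LHS]mulrAC; reflexivity.
rewrite -mulr_sumr (@sum_deg C y d); last by rewrite -ltnS. rewrite -!mulrA; congr (_ * _); rewrite mulrC divfK //; exact: fact_neq0.
Qed.

End Comb.

Section Main.
Variable R : realType.

Lemma sqrt_condP (C D : nat) (q : 'I_C -> 'I_D.+1 -> R) (z : 'I_C -> 'I_C -> R)
  (s r : 'I_C) (n : {ffun 'I_C -> 'I_D.+1}) :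
  (forall s d, 0 <= q s d) -> (forall s k, 0 <= z s k) ->
  Num.sqrt (condP q z s n * condP q z r n)
  = Num.sqrt (q s (inord (degree n)) * q r (inord (degree n)))
    * ((degree n)`!)%:R / (\prod_(k < C) (n k)`!)%:R
    * \prod_(k < C) (Num.sqrt (z s k * z r k)) ^+ (n k).
Proof.
move=> hq hz.
set a := q s _; set b := q r _.
pose m : R := ((degree n)`!)%:R / (\prod_(k < C) (n k)`!)%:R.
set Y := \prod_(k < C) (Num.sqrt (z s k * z r k)) ^+ (n k).
have m0 : 0 <= m by rewrite /m divr_ge0 ?ler0n.
have Y0 : 0 <= Y by apply: prodr_ge0 => k _; rewrite exprn_ge0 ?sqrtr_ge0.
have hY : Y ^+ 2 = (\prod_(k < C) z s k ^+ n k) * \prod_(k < C) z r k ^+ n k.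
  rewrite /Y -prodrXl -big_split /=; apply: eq_bigr => k _.
  by rewrite -exprM mulnC exprM sqr_sqrtr ?mulr_ge0 // exprMn.
have E : condP q z s n * condP q z r n = (a * b) * (m * Y) ^+ 2.
  by rewrite /condP -/a -/b exprMn hY /m; ring.
rewrite E (@sqrtrM _ (a * b) ((m * Y) ^+ 2)) ?mulr_ge0 ?hq // (sqrtr_sqr (m * Y)) ger0_norm ?mulr_ge0 //.
by rewrite /m !mulrA.
Qed.

End Main.

Theorem theorem1 (R : realType) (C D : nat) (hC : (1 <= C)%N)
  (p : 'I_C -> R) (q : 'I_C -> 'I_D.+1 -> R) (c : 'I_C -> 'I_C -> R)
  (hp_pos : forall s, 0 < p s) (hp_sum : \sum_(s < C) p s = 1)
  (hq_nonneg : forall s d, 0 <= q s d) (hq_sum : forall s, \sum_(d < D.+1) q s d = 1)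
  (hc_nonneg : forall s r, 0 <= c s r)
  (hc_pos : forall s, 0 < \sum_(k < C) p k * c s k) :
  NIC p q (zprob p c) <= MI p q (zprob p c).
Proof.
set z := zprob p c.
have hz0 : forall s k, 0 <= z s k.
  move=> s k; rewrite /z /zprob; apply: divr_ge0; [apply: mulr_ge0 => //; exact: ltW | exact: ltW].
have hz1 : forall s, \sum_(k < C) z s k = 1.
  move=> s; rewrite /z /zprob -mulr_suml divff //; exact: lt0r_neq0.
have P0 : forall s n, 0 <= condP q z s n.
  move=> s n; rewrite /condP mulr_ge0 ?divr_ge0 ?mulr_ge0 ?ler0n //.
  by apply: prodr_ge0 => k _; rewrite exprn_ge0.
have P1 : forall s, \sum_(n in @countvec C D) condP q z s n = 1.
  move=> s; rewrite /condP (@multinom_sum R D C (q s) (z s)) hz1.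
  by under eq_bigr do rewrite expr1n mulr1.
have EQ : forall s r,
  \sum_(d < D.+1) Num.sqrt (q s d * q r d) * (\sum_(k < C) Num.sqrt (z s k * z r k)) ^+ d
  = \sum_(n in @countvec C D) Num.sqrt (condP q z s n * condP q z r n).
  move=> s r.
  rewrite -(@multinom_sum R D C (fun d => Num.sqrt (q s d * q r d))
                                (fun k => Num.sqrt (z s k * z r k))).
  by apply: eq_bigr => n _; rewrite sqrt_condP.
rewrite /NIC /MI /entropyM /condEntropyM.
under eq_bigr => s _ do under eq_bigr => r _ do rewrite EQ.
exact: abstract_bound.
Qed.
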